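(* Assume (A.3). Then there are finite constants $C_M,C_b,C_f>0$, independent of $h$, such that for all sufficiently small $h$: \[ |M(y^\star(0),y^\star(T))-M(\hat y_h(0),\hat y_h(T))|\le C_Mh^{\lambda\eta},\qquad \|b(\hat y_h(0),\hat y_h(T))\|_2^2\le C_bh^{2\lambda\eta}, \] and, for almost every $t\in[0,T]$, \[ \big\|\big(f_1(y^\star(t),u^\star(t),t)-f_1(\hat y_h(t),\hat u_h(t),t),\ f_2(y^\star(t),u^\star(t),t)-f_2(\hat y_h(t),\hat u_h(t),t)\big)\big\|_2^2\le C_fh^{2\lambda\eta}. \]
   Context: Let $T>0$. $\mathcal{X}$: pairs $(y,u)$, $y:[0,T]\to\mathbb{R}^{n_y}$ with $y\in L^\infty$, $\dot y\in L^2$, $u\in L^\infty([0,T];\mathbb{R}^{n_u})$; $\|(y,u)\|_{\mathcal{X}}=\|\dot y\|_{L^2}+\operatorname{ess\,sup}_t\|(y(t),u(t))\|_\infty$. Given $M,b$ on $\mathbb{R}^{n_y}\times\mathbb{R}^{n_y}$ (values in $\mathbb{R}$, $\mathbb{R}^{n_b}$), $f_1,f_2$ on $\mathbb{R}^{n_y}\times\mathbb{R}^{n_u}\times[0,T]$ (values in $\mathbb{R}^{n_y}$, $\mathbb{R}^{n_c}$), and bounds $y_L\le y_R$, $u_L\le u_R$, the optimal control problem minimizes $M(y(0),y(T))$ over $\mathcal{X}$ subject to $b(y(0),y(T))=0$, $\dot y=f_1(y,u,t)$, $f_2(y,u,t)=0$ a.e., and the bounds for all $t$; $(y^\star,u^\star)$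 is a local (hence feasible) minimizer. Mesh $0=t_1<\dots<t_{N+1}=T$, $h=\max_i(t_{i+1}-t_i)$, degree $p$; $\mathcal{X}_{h,p}$: $y_h$ continuous and polynomial of degree $\le p$ on each $[t_i,t_{i+1}]$, $u_h$ polynomial of degree $\le p-1$ on each $[t_i,t_{i+1}]$. $\mathcal{B}_{h,p}\subset\mathcal{X}_{h,p}$ is the set of pairs satisfying the bounds at the sampling points of the discretization. (Approximability) there are $h_0,\eta,C_\eta>0$ such that for each $h\le h_0$ there exists $(y_h,u_h)\in\mathcal{B}_{h,p}$ with $\|(y^\star,u^\star)-(y_h,u_h)\|_{\mathcal{X}}\le C_\eta h^\eta$; $(\hat y_h,\hat u_h)$ denotes a fixed such pair. (A.3): there are $\lambda\in(0,1]$, $C_\lambda>0$, $\epsilon>0$ with $|M(y^\star(0),y^\star(T))-M(a,a')|\le C_\lambda\|(y^\star(0)-a,y^\star(T)-a')\|_2^\lambda$ and $\|b(y^\star(0),y^\star(T))-b(a,a')\|_2\le C_\lambda\|(y^\star(0)-a,y^\star(T)-a')\|_2^\lambda$ whenever $\|(y^\star(0)-a,y^\star(T)-a')\|_2\le\epsilon$, and for each $t\in[0,T]$, $\|(f_1(y^\star(t),u^\star(t),t)-f_1(v,w,t),f_2(y^\star(t),u^\star(t),t)-f_2(v,w,t))\|_2\le C_\lambda\|(y^\star(t)-v,u^\star(t)-w)\|_2^\lambda$ whenever $\|(y^\star(t)-v,u^\star(t)-w)\|_2\le\epsilon$. *)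

(* Defs.v *)
From HB Require Import structures.
From mathcomp Require Import all_boot all_order all_algebra.
From mathcomp Require Import all_classical all_reals all_analysis.
Set Implicit Arguments. Unset Strict Implicit. Unset Printing Implicit Defensive.
Import Order.TTheory GRing.Theory Num.Theory numFieldNormedType.Exports.
Local Open Scope classical_set_scope.
Local Open Scope ring_scope.

Definition normInf {R : realType} {n : nat} (v : 'I_n -> R) : R :=
  \big[Num.max/0]_(i < n) `|v i|.
Definition norm2 {R : realType} {n : nat} (v : 'I_n -> R) : R :=
  Num.sqrt (\sum_(i < n) v i ^+ 2).
(* norms of a concatenated vector (v, w) in R^(n+m) *)
Definition normInf_pair {R : realType} {n m : nat}
  (v : 'I_n -> R) (w : 'I_m -> R) : R := Num.max (normInf v) (normInf w).
Definition norm2_pair {R : realType} {n m : nat}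
  (v : 'I_n -> R) (w : 'I_m -> R) : R := Num.sqrt (norm2 v ^+ 2 + norm2 w ^+ 2).
Definition vsub {R : realType} {n : nat} (v w : 'I_n -> R) : 'I_n -> R :=
  fun i => v i - w i.

(* essential supremum over D w.r.t. Lebesgue measure
   (the library's ess_sup, with the "a.e." restricted to D) *)
Definition ess_sup_on {R : realType} (D : set R) (f : R -> \bar R) : \bar R :=
  ereal_inf [set c | \forall t \ae (@lebesgue_measure R), D t -> (f t <= c)%E].

(* y is absolutely continuous on [0,T] with (a.e.) derivative yd, and
   yd is square integrable on [0,T] *)
Definition is_deriv {R : realType} {n : nat} (T : R)
  (y yd : R -> 'I_n -> R) : Prop :=
  (forall i, (@lebesgue_measure R).-integrable `[0%R, T]%classic (fun t => (yd t i)%:E)) /\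
  (forall t, 0 <= t <= T -> forall i,
     y t i = y 0 i + Rintegral (@lebesgue_measure R) `[0%R, t]%classic (fun s => yd s i)) /\
  (\int[@lebesgue_measure R]_(t in `[0%R, T]%classic) ((norm2 (yd t)) ^+ 2)%:E < +oo)%E.

Definition L2norm {R : realType} {n : nat} (T : R) (yd : R -> 'I_n -> R) : \bar R :=
  match (\int[@lebesgue_measure R]_(t in `[0%R, T]%classic) ((norm2 (yd t)) ^+ 2)%:E)%E with
  | r%:E => (Num.sqrt r)%:E
  | _ => +oo%E
  end.

Definition ess_bounded {R : realType} {n : nat} (T : R) (f : R -> 'I_n -> R) : Prop :=
  exists c : R, \forall t \ae (@lebesgue_measure R), `[0%R, T]%classic t -> normInf (f t) <= c.

Definition in_X {R : realType} {ny nu : nat} (T : R)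
  (y : R -> 'I_ny -> R) (u : R -> 'I_nu -> R) : Prop :=
  (exists yd, is_deriv T y yd) /\ ess_bounded T y /\
  (forall i, measurable_fun `[0%R, T]%classic (fun t => u t i)) /\ ess_bounded T u.

(* ||(dy,du)||_X computed with the (a.e. unique) derivative dyd of dy *)
Definition Xnorm_with {R : realType} {ny nu : nat} (T : R)
  (dyd dy : R -> 'I_ny -> R) (du : R -> 'I_nu -> R) : \bar R :=
  (L2norm T dyd + ess_sup_on `[0%R, T]%classic (fun t => (normInf_pair (dy t) (du t))%:E))%E.

Definition Xdist_le {R : realType} {ny nu : nat} (T : R)
  (y1 : R -> 'I_ny -> R) (u1 : R -> 'I_nu -> R)
  (y2 : R -> 'I_ny -> R) (u2 : R -> 'I_nu -> R) (c : R) : Prop :=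
  exists dyd, is_deriv T (fun t => vsub (y1 t) (y2 t)) dyd /\
    (Xnorm_with T dyd (fun t => vsub (y1 t) (y2 t)) (fun t => vsub (u1 t) (u2 t))
       <= c%:E)%E.
Definition Xdist_lt {R : realType} {ny nu : nat} (T : R)
  (y1 : R -> 'I_ny -> R) (u1 : R -> 'I_nu -> R)
  (y2 : R -> 'I_ny -> R) (u2 : R -> 'I_nu -> R) (c : R) : Prop :=
  exists dyd, is_deriv T (fun t => vsub (y1 t) (y2 t)) dyd /\
    (Xnorm_with T dyd (fun t => vsub (y1 t) (y2 t)) (fun t => vsub (u1 t) (u2 t))
       < c%:E)%E.

Definition feasible {R : realType} {ny nu nb nc : nat} (T : R)
  (b : ('I_ny -> R) -> ('I_ny -> R) -> 'I_nb -> R)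
  (f1 : ('I_ny -> R) -> ('I_nu -> R) -> R -> 'I_ny -> R)
  (f2 : ('I_ny -> R) -> ('I_nu -> R) -> R -> 'I_nc -> R)
  (yL yR : 'I_ny -> R) (uL uR : 'I_nu -> R)
  (y : R -> 'I_ny -> R) (u : R -> 'I_nu -> R) : Prop :=
  in_X T y u /\
  b (y 0) (y T) = (fun _ => 0) /\
  (exists yd, is_deriv T y yd /\
     \forall t \ae (@lebesgue_measure R), `[0%R, T]%classic t -> yd t = f1 (y t) (u t) t) /\
  (\forall t \ae (@lebesgue_measure R), `[0%R, T]%classic t -> f2 (y t) (u t) t = (fun _ => 0)) /\
  (forall t, 0 <= t <= T ->
     (forall k, yL k <= y t k <= yR k) /\ (forall k, uL k <= u t k <= uR k)).

Definition local_min {R : realType} {ny nu nb nc : nat} (T : R)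
  (M : ('I_ny -> R) -> ('I_ny -> R) -> R)
  (b : ('I_ny -> R) -> ('I_ny -> R) -> 'I_nb -> R)
  (f1 : ('I_ny -> R) -> ('I_nu -> R) -> R -> 'I_ny -> R)
  (f2 : ('I_ny -> R) -> ('I_nu -> R) -> R -> 'I_nc -> R)
  (yL yR : 'I_ny -> R) (uL uR : 'I_nu -> R)
  (ys : R -> 'I_ny -> R) (us : R -> 'I_nu -> R) : Prop :=
  feasible T b f1 f2 yL yR uL uR ys us /\
  exists delta : R, 0 < delta /\
    forall y u, feasible T b f1 f2 yL yR uL uR y u ->
      Xdist_lt T y u ys us delta -> M (ys 0) (ys T) <= M (y 0) (y T).

Definition is_mesh {R : realType} (T h : R) (N : nat) (tm : nat -> R) : Prop :=
  (0 < N)%N /\ tm 0%N = 0 /\ tm N = T /\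
  (forall i, (i < N)%N -> tm i < tm i.+1) /\
  h = \big[Num.max/0]_(i < N) (tm i.+1 - tm i).

(* X_{h,p}: y polynomial of degree <= p on each closed cell (hence continuous),
   u polynomial of degree <= p-1 on each open cell *)
Definition in_Xhp {R : realType} {ny nu : nat} (p N : nat) (tm : nat -> R)
  (y : R -> 'I_ny -> R) (u : R -> 'I_nu -> R) : Prop :=
  forall i, (i < N)%N ->
    (forall k, exists P : {poly R}, (size P <= p.+1)%N /\
       forall t, tm i <= t <= tm i.+1 -> y t k = P.[t]) /\
    (forall k, exists Q : {poly R}, (size Q <= p)%N /\
       forall t, tm i < t < tm i.+1 -> u t k = Q.[t]).

Definition in_Bhp {R : realType} {ny nu : nat} (p N : nat) (tm : nat -> R)
  (samp : seq R) (yL yR : 'I_ny -> R) (uL uR : 'I_nu -> R)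
  (y : R -> 'I_ny -> R) (u : R -> 'I_nu -> R) : Prop :=
  in_Xhp p N tm y u /\
  forall s, s \in samp ->
    (forall k, yL k <= y s k <= yR k) /\ (forall k, uL k <= u s k <= uR k).

Definition assumption_A3 {R : realType} {ny nu nb nc : nat} (T : R)
  (M : ('I_ny -> R) -> ('I_ny -> R) -> R)
  (b : ('I_ny -> R) -> ('I_ny -> R) -> 'I_nb -> R)
  (f1 : ('I_ny -> R) -> ('I_nu -> R) -> R -> 'I_ny -> R)
  (f2 : ('I_ny -> R) -> ('I_nu -> R) -> R -> 'I_nc -> R)
  (ys : R -> 'I_ny -> R) (us : R -> 'I_nu -> R) (lam Clam eps : R) : Prop :=
  0 < lam <= 1 /\ 0 < Clam /\ 0 < eps /\
  (forall a a' : 'I_ny -> R,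
     norm2_pair (vsub (ys 0) a) (vsub (ys T) a') <= eps ->
     `|M (ys 0) (ys T) - M a a'|
        <= Clam * norm2_pair (vsub (ys 0) a) (vsub (ys T) a') `^ lam /\
     norm2 (vsub (b (ys 0) (ys T)) (b a a'))
        <= Clam * norm2_pair (vsub (ys 0) a) (vsub (ys T) a') `^ lam) /\
  (forall t, 0 <= t <= T -> forall v w,
     norm2_pair (vsub (ys t) v) (vsub (us t) w) <= eps ->
     norm2_pair (vsub (f1 (ys t) (us t) t) (f1 v w t))
                (vsub (f2 (ys t) (us t) t) (f2 v w t))
       <= Clam * norm2_pair (vsub (ys t) v) (vsub (us t) w) `^ lam).

(* Main.v *)
Require Import Defs.
From HB Require Import structures.
From mathcomp Require Import all_boot all_order all_algebra.
From mathcomp Require Import all_classical all_reals all_analysis.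
Import Order.TTheory GRing.Theory Num.Theory numFieldNormedType.Exports.
From mathcomp Require Import ring lra.
Local Open Scope classical_set_scope.
Local Open Scope ring_scope.

Lemma normInf_ge {R : realType} {n} (v : 'I_n -> R) i : `|v i| <= normInf v.
Proof. rewrite /normInf; exact: (le_bigmax _ (fun j => `|v j|)). Qed.

Lemma sum_sq_le {R : realType} {n} {v : 'I_n -> R} {a : R} :
  (forall i, `|v i| <= a) -> \sum_(i < n) v i ^+ 2 <= n%:R * a ^+ 2.
Proof.
move=> H.
apply: (@le_trans _ _ (\sum_(i < n) a ^+ 2)).
  apply: ler_sum => i _; rewrite -real_normK ?num_real //; apply: lerXn2r; rewrite ?nnegrE ?normr_ge0 ?(le_trans _ (H i)) //.
by rewrite sumr_const card_ord mulr_natl.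
Qed.

Lemma norm2_pair_bound {R : realType} {n} {m} {v : 'I_n -> R} {w : 'I_m -> R} {a : R} :
  0 <= a -> (forall i, `|v i| <= a) -> (forall j, `|w j| <= a) ->
  norm2_pair v w <= ((n + m)%:R + 1) * a.
Proof.
move=> a0 Hv Hw.
rewrite /norm2_pair /norm2 !sqr_sqrtr ?sumr_ge0 // => [|i _|i _]; try exact: sqr_ge0.
have k0 : 0 <= (n + m)%:R :> R by [].
rewrite -(ger0_norm (_ : 0 <= ((n + m)%:R + 1) * a)); last by apply: mulr_ge0 => //; lra.
rewrite -sqrtr_sqr; apply: ler_wsqrtr.
have h1 := sum_sq_le Hv. have h2 := sum_sq_le Hw. have h3 := lerD h1 h2. apply: le_trans h3 _.
rewrite -mulrDl -natrD exprMn.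
apply: ler_wpM2r; first exact: sqr_ge0.
nra.
Qed.

Lemma ae_itv_false {R : realType} (P : R -> Prop) (a b : R) : a < b ->
  (\forall t \ae (@lebesgue_measure R), P t) ->
  (forall t, a <= t <= b -> ~ P t) -> False.
Proof.
move=> ab [N [mN N0 sN]] nP.
have : (lebesgue_measure `[a, b]%classic <= lebesgue_measure N)%E.
  apply: le_measure; rewrite ?inE //.
  move=> t /= tab; apply: sN => /=; apply: nP.
  by move: tab; rewrite in_itv.
rewrite N0 lebesgue_measure_itv /= lte_fin ab -EFinD lee_fin; lra.
Qed.

Lemma endpt0 {R : realType} (T K : R) (g phi : R -> R) (Q : R -> Prop) :
  0 < T -> (@lebesgue_measure R).-integrable `[0, T] (fun t => (g t)%:E) ->
  (forall t, 0 <= t <= T -> phi t = phi 0 + Rintegral (@lebesgue_measure R) `[0, t] g) ->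
  (\forall t \ae (@lebesgue_measure R), Q t) ->
  (forall t, 0 <= t <= T -> Q t -> `|phi t| <= K) -> `|phi 0| <= K.
Proof.
move=> T0 ig Hphi HQ HK.
rewrite leNgt; apply/negP => H.
have e0 : 0 < `|phi 0| - K by rewrite subr_gt0.
have := parameterized_integral_near_left T0 e0 ig.
case/nbhs_ballP => d /= d0 Hd.
pose m := Num.min (d / 2) T.
have m0 : 0 < m by rewrite lt_min T0 andbT divr_gt0.
have md : m <= d / 2 by rewrite /m ge_min lexx.
have mT : m <= T by rewrite /m ge_min lexx orbT.
apply: (ae_itv_false _ _ _ m0 HQ) => t /andP[t0 tm] Qt.
have tT : t <= T by lra.
have := HK t (introT andP (conj t0 tT)) Qt.
have tb : ball 0 d t.
  rewrite /ball /= sub0r normrN ger0_norm //.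
  lra.
have := Hd t tb t0.
rewrite /parameterized_integral (Hphi t (introT andP (conj t0 tT))).
move=> h1 h2.
have := ler_normD (phi 0 + Rintegral lebesgue_measure `[0, t] g) (- Rintegral lebesgue_measure `[0, t] g).
rewrite addrK normrN; lra.
Qed.

Lemma endptT {R : realType} (T K : R) (g phi : R -> R) (Q : R -> Prop) :
  0 < T -> (@lebesgue_measure R).-integrable `[0, T] (fun t => (g t)%:E) ->
  (forall t, 0 <= t <= T -> phi t = phi 0 + Rintegral (@lebesgue_measure R) `[0, t] g) ->
  (\forall t \ae (@lebesgue_measure R), Q t) ->
  (forall t, 0 <= t <= T -> Q t -> `|phi t| <= K) -> `|phi T| <= K.
Proof.
move=> T0 ig Hphi HQ HK.
rewrite leNgt; apply/negP => H.
have e0 : 0 < `|phi T| - K by rewrite subr_gt0.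
have := parameterized_integral_cvg_at_left T0 ig.
move/cvgrPdist_lt => /(_ _ e0).
rewrite near_withinE; case/nbhs_ballP => d /= d0 Hd.
pose m := Num.min (d / 2) T.
have m0 : 0 < m by rewrite lt_min T0 andbT divr_gt0.
have md : m <= d / 2 by rewrite /m ge_min lexx.
have mT : m <= T by rewrite /m ge_min lexx orbT.
have m20 : T - m < T - m / 2 by lra.
apply: (ae_itv_false _ _ _ m20 HQ) => t /andP[t0 tm] Qt.
have tT : 0 <= t <= T by apply/andP; split; lra.
have := HK t tT Qt.
have tb : ball T d t.
  rewrite /ball /= ger0_norm; lra.
have := Hd t tb.
have tlt : t < T by lra.
move=> /(_ tlt).
rewrite /parameterized_integral (Hphi t tT) (Hphi T (introT andP (conj (ltW T0) (lexx T)))).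
move=> h1 h2.
have := ler_normD (phi 0 + Rintegral lebesgue_measure `[0, t] g)
  (Rintegral lebesgue_measure `[0, T] g - Rintegral lebesgue_measure `[0, t] g).
rewrite [X in `|X|](_ : _ = phi 0 + Rintegral lebesgue_measure `[0, T] g); last by ring.
lra.
Qed.

Lemma pow_bound {R : realType} (Clam lam eta D h x : R) :
  0 < lam -> 0 < h -> 0 <= D -> 0 <= x -> x <= D * h `^ eta -> 0 <= Clam ->
  Clam * x `^ lam <= (Clam * D `^ lam) * h `^ (lam * eta).
Proof.
move=> lam0 h0 D0 x0 xD C0.
rewrite -mulrA; apply: ler_wpM2l => //.
rewrite (mulrC lam eta) powRrM -powRM ?powR_ge0 //.
apply: (ge0_ler_powR (ltW lam0)) => //; rewrite nnegrE ?mulr_ge0 ?powR_ge0 //.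
Qed.

Lemma sq_step {R : realType} (CM lam eta h a : R) :
  0 <= a -> a <= CM * h `^ (lam * eta) ->
  a ^+ 2 <= CM ^+ 2 * h `^ (2 * lam * eta).
Proof.
move=> a0 aC.
have -> : 2 * lam * eta = (lam * eta) * 2%:R by ring.
rewrite powRrM powR_mulrn ?powR_ge0 // -exprMn.
apply: lerXn2r; rewrite ?nnegrE //; exact: (le_trans a0 aC).
Qed.

Lemma norm2_vsub0 {R : realType} {n} (w : 'I_n -> R) :
  norm2 (vsub (fun _ => 0) w) = norm2 w.
Proof.
rewrite /norm2 /vsub; congr Num.sqrt; apply: eq_bigr => i _.
by rewrite sub0r sqrrN.
Qed.

Theorem mainTheorem13 (R : realType) (T : R) (ny nu nb nc : nat)
  (M : ('I_ny -> R) -> ('I_ny -> R) -> R)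
  (b : ('I_ny -> R) -> ('I_ny -> R) -> 'I_nb -> R)
  (f1 : ('I_ny -> R) -> ('I_nu -> R) -> R -> 'I_ny -> R)
  (f2 : ('I_ny -> R) -> ('I_nu -> R) -> R -> 'I_nc -> R)
  (yL yR : 'I_ny -> R) (uL uR : 'I_nu -> R)
  (ys : R -> 'I_ny -> R) (us : R -> 'I_nu -> R)
  (p : nat) (samp : nat -> (nat -> R) -> seq R)
  (h0 eta Ceta : R)
  (yh : nat -> (nat -> R) -> R -> 'I_ny -> R)
  (uh : nat -> (nat -> R) -> R -> 'I_nu -> R)
  (lam Clam eps : R) :
  0 < T -> (forall k, yL k <= yR k) -> (forall k, uL k <= uR k) -> (0 < p)%N ->
  local_min T M b f1 f2 yL yR uL uR ys us ->
  (* approximability, with (yh N tm, uh N tm) the fixed approximant on mesh tm *)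
  0 < h0 -> 0 < eta -> 0 < Ceta ->
  (forall h N tm, is_mesh T h N tm -> h <= h0 ->
     in_Bhp p N tm (samp N tm) yL yR uL uR (yh N tm) (uh N tm) /\
     Xdist_le T ys us (yh N tm) (uh N tm) (Ceta * h `^ eta)) ->
  (* (A.3) *)
  assumption_A3 T M b f1 f2 ys us lam Clam eps ->
  exists CM Cb Cf : R, 0 < CM /\ 0 < Cb /\ 0 < Cf /\
  exists h1 : R, 0 < h1 /\
    forall h N tm, is_mesh T h N tm -> h <= h1 ->
      `|M (ys 0) (ys T) - M (yh N tm 0) (yh N tm T)| <= CM * h `^ (lam * eta) /\
      norm2 (b (yh N tm 0) (yh N tm T)) ^+ 2 <= Cb * h `^ (2 * lam * eta) /\
      (\forall t \ae (@lebesgue_measure R), `[0%R, T]%classic t ->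
         norm2_pair (vsub (f1 (ys t) (us t) t) (f1 (yh N tm t) (uh N tm t) t))
                    (vsub (f2 (ys t) (us t) t) (f2 (yh N tm t) (uh N tm t) t)) ^+ 2
           <= Cf * h `^ (2 * lam * eta)).
Proof.
move=> T0 hyL huL p0 Hlm h00 eta0 Ceta0 Happ HA3.
case: HA3 => /andP[lam0 lam1] [Clam0 [eps0 [HMb Hf]]].
case: Hlm => [[_ [Hbys _]] _].
pose D := ((ny + ny)%:R + 1) * (2 * Ceta) + ((ny + nu)%:R + 1) * (2 * Ceta).
have D0 : 0 < D by rewrite /D; apply: addr_gt0; apply: mulr_gt0 => //; lra.
pose CM := Clam * D `^ lam.
have CM0 : 0 < CM by rewrite /CM mulr_gt0 // powR_gt0.
exists CM, (CM ^+ 2), (CM ^+ 2).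
split => //; split; first exact: exprn_gt0.
split; first exact: exprn_gt0.
pose h1 := Num.min h0 ((eps / D) `^ eta^-1).
have h1pos : 0 < h1 by rewrite /h1 lt_min h00 powR_gt0 // divr_gt0.
exists h1; split => // h N tm Hm hh1.
have hpos : 0 < h.
  case: Hm => N0 [tm0 [tmN [tminc ->]]].
  apply: (lt_le_trans _ (le_bigmax _ (fun i : 'I_N => tm i.+1 - tm i) (Ordinal N0))).
  by rewrite /= subr_gt0; apply: tminc.
have hh0 : h <= h0 by apply: (le_trans hh1); rewrite /h1 ge_min lexx.
have hD : D * h `^ eta <= eps.
  have : h `^ eta <= eps / D.
    apply: (@le_trans _ _ (h1 `^ eta)).
      by apply: (ge0_ler_powR (ltW eta0)); rewrite ?nnegrE ?(ltW hpos) ?(ltW h1pos).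
    apply: (@le_trans _ _ (((eps / D) `^ eta^-1) `^ eta)).
      apply: (ge0_ler_powR (ltW eta0)); rewrite ?nnegrE ?(ltW h1pos) ?powR_ge0 //.
      by rewrite /h1 ge_min lexx orbT.
    by rewrite -powRrM mulVf ?gt_eqF // powRr1 // ltW // divr_gt0.
  by rewrite ler_pdivlMr // mulrC.
case: (Happ h N tm Hm hh0) => _ [dyd [[Hint [Hrep Hfin]] HX]].
pose c := Ceta * h `^ eta.
have c0 : 0 < c by rewrite /c mulr_gt0 // powR_gt0.
have Hess : (ess_sup_on `[0%R, T]%classic
   (fun t => (normInf_pair (vsub (ys t) (yh N tm t)) (vsub (us t) (uh N tm t)))%:E)
    < (2 * c)%:E)%E.
  move: HX; rewrite /Xnorm_with /L2norm -/c.
  have I0 : (0 <= \int[lebesgue_measure]_(t in `[0%R, T]) (norm2 (dyd t) ^+ 2)%:E)%E.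
    by apply: integral_ge0 => t _; rewrite lee_fin sqr_ge0.
  move: Hfin I0.
  case: (\int[lebesgue_measure]_(t in `[0%R, T]) (norm2 (dyd t) ^+ 2)%:E)%E => [r| |] //= _ _.
  case: (ess_sup_on _ _) => [s| |] //=.
  - rewrite -EFinD !lee_fin lte_fin => H; have := sqrtr_ge0 r; lra.
  - by move=> _; rewrite ltNyr.
case/ereal_inf_lt: Hess => y Hy ylt.
move: Hy => /= Hy.
pose Q := fun t => `[0%R, T]%classic t ->
  ((normInf_pair (vsub (ys t) (yh N tm t)) (vsub (us t) (uh N tm t)))%:E <= y)%E.
have Qb : forall t, 0 <= t <= T -> Q t ->
    (forall i, `|vsub (ys t) (yh N tm t) i| <= 2 * c) /\
    (forall j, `|vsub (us t) (uh N tm t) j| <= 2 * c).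
  move=> t tT Qt.
  have tT' : `[0%R, T]%classic t by rewrite /= in_itv /=.
  have := lt_le_trans ylt (lexx _). move: (Qt tT') => Qt' _.
  have hb : normInf_pair (vsub (ys t) (yh N tm t)) (vsub (us t) (uh N tm t)) <= 2 * c.
    by rewrite -lee_fin; apply: (le_trans Qt'); apply: ltW.
  split => [i|j].
    apply: (le_trans (normInf_ge _ i)); apply: le_trans hb.
    by rewrite /normInf_pair le_max lexx.
  apply: (le_trans (normInf_ge _ j)); apply: le_trans hb.
  by rewrite /normInf_pair le_max lexx orbT.
have end0 : forall i, `|vsub (ys 0) (yh N tm 0) i| <= 2 * c.
  move=> i.
  apply: (@endpt0 R T (2 * c) (fun s => dyd s i) (fun t => vsub (ys t) (yh N tm t) i) Q T0 (Hint i)).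
  - by move=> t tT; rewrite (Hrep t tT i).
  - exact: Hy.
  - by move=> t tT Qt; exact: (proj1 (Qb t tT Qt) i).
have endT : forall i, `|vsub (ys T) (yh N tm T) i| <= 2 * c.
  move=> i.
  apply: (@endptT R T (2 * c) (fun s => dyd s i) (fun t => vsub (ys t) (yh N tm t) i) Q T0 (Hint i)).
  - by move=> t tT; rewrite (Hrep t tT i).
  - exact: Hy.
  - by move=> t tT Qt; exact: (proj1 (Qb t tT Qt) i).
have c20 : 0 <= 2 * c by lra.
have P0 : 0 <= h `^ eta by exact: powR_ge0.
have A0 : 0 <= ((ny + ny)%:R + 1) * (2 * Ceta) :> R.
  by apply: mulr_ge0; [rewrite addr_ge0 ?ler0n | lra].
have B0 : 0 <= ((ny + nu)%:R + 1) * (2 * Ceta) :> R.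
  by apply: mulr_ge0; [rewrite addr_ge0 ?ler0n | lra].
have hx0 : norm2_pair (vsub (ys 0) (yh N tm 0)) (vsub (ys T) (yh N tm T)) <= D * h `^ eta.
  apply: le_trans (norm2_pair_bound c20 end0 endT) _.
  have -> : ((ny + ny)%:R + 1) * (2 * c) = ((ny + ny)%:R + 1) * (2 * Ceta) * h `^ eta.
    by rewrite /c; ring.
  have -> : D * h `^ eta = ((ny + ny)%:R + 1) * (2 * Ceta) * h `^ eta +
     ((ny + nu)%:R + 1) * (2 * Ceta) * h `^ eta by rewrite /D; ring.
  have := mulr_ge0 B0 P0; lra.
have n0 : 0 <= norm2_pair (vsub (ys 0) (yh N tm 0)) (vsub (ys T) (yh N tm T)).
  exact: sqrtr_ge0.
have [HM Hb] := HMb _ _ (le_trans hx0 hD).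
split.
  apply: le_trans HM _; apply: pow_bound => //; exact: ltW.
split.
  rewrite Hbys norm2_vsub0 in Hb.
  apply: sq_step; first exact: sqrtr_ge0.
  apply: le_trans Hb _; apply: pow_bound => //; exact: ltW.
case: Hy => Nn [mN N0 sN]; exists Nn; split => // t /= nG; apply: sN => /= Qt; apply: nG => tT.
have tT' : 0 <= t <= T by move: tT; rewrite in_itv.
have [bd be] := Qb t tT' Qt.
have hxt : norm2_pair (vsub (ys t) (yh N tm t)) (vsub (us t) (uh N tm t)) <= D * h `^ eta.
  apply: le_trans (norm2_pair_bound c20 bd be) _.
  have -> : ((ny + nu)%:R + 1) * (2 * c) = ((ny + nu)%:R + 1) * (2 * Ceta) * h `^ eta.
    by rewrite /c; ring.
  have -> : D * h `^ eta = ((ny + ny)%:R + 1) * (2 * Ceta) * h `^ eta +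
     ((ny + nu)%:R + 1) * (2 * Ceta) * h `^ eta by rewrite /D; ring.
  have := mulr_ge0 A0 P0; lra.
have nt0 : 0 <= norm2_pair (vsub (ys t) (yh N tm t)) (vsub (us t) (uh N tm t)).
  exact: sqrtr_ge0.
have Hft := Hf t tT' _ _ (le_trans hxt hD).
apply: sq_step; first exact: sqrtr_ge0.
apply: le_trans Hft _; apply: pow_bound => //; exact: ltW.
Qed.
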